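(* Let $p\in S^n$ and $T_p=\{p\}\times(S^n\setminus\{p\})\subset\tilde S^n$. There exists a homotopy equivalence $\phi\colon\tilde S^n\to S^n$, equivariant with respect to $\tau$ on $\tilde S^n$ and the antipodal involution on $S^n$, which is transversal to a $0$-sphere $S^0\subset S^n$ (a pair of antipodal points) and satisfies $\phi^{-1}(S^0)=T_p\cup\tau T_p$.
   Context: $\tilde S^n=S^n\times S^n\setminus\Delta_{S^n}$ is the deleted product, and $\tau(x,y)=(y,x)$ is the factor exchanging involution on it. *)

(* Defs.v *)
From HB Require Import structures.
From mathcomp Require Import all_boot all_order all_algebra.
From mathcomp Require Import all_classical all_reals all_analysis.
Import Order.TTheory GRing.Theory Num.Theory.
Import numFieldNormedType.Exports.
Local Open Scope classical_set_scope.
Local Open Scope ring_scope.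


Definition dotp {R : realType} {m : nat} (u v : 'rV[R]_m) : R := \sum_(i < m) u 0 i * v 0 i.

Definition sphere {R : realType} (n : nat) : set 'rV[R]_n.+1 := [set x | dotp x x = 1].

(* the deleted product  S^n x S^n \ Delta *)
Definition delprod {R : realType} (n : nat) : set ('rV[R]_n.+1 * 'rV[R]_n.+1) :=
  [set z | sphere n z.1 /\ sphere n z.2 /\ z.1 <> z.2].

Definition tau {R : realType} (n : nat) (z : 'rV[R]_n.+1 * 'rV[R]_n.+1) := (z.2, z.1).

Definition Tp {R : realType} (n : nat) (p : 'rV[R]_n.+1) : set ('rV[R]_n.+1 * 'rV[R]_n.+1) :=
  [set z | z.1 = p /\ sphere n z.2 /\ z.2 <> p].

Definition tangent_sphere {R : realType} (n : nat) (x : 'rV[R]_n.+1) : set 'rV[R]_n.+1 :=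
  [set w | dotp w x = 0].
Definition tangent_delprod {R : realType} (n : nat) (z : 'rV[R]_n.+1 * 'rV[R]_n.+1) :
  set ('rV[R]_n.+1 * 'rV[R]_n.+1) :=
  [set v | dotp v.1 z.1 = 0 /\ dotp v.2 z.2 = 0].


Fixpoint iterD {R : realType} {V W : normedModType R} (vs : seq V) (F : V -> W)
  : V -> W :=
  match vs with
  | [::] => F
  | v :: vs' => fun x => 'D_v (iterD vs' F) x
  end.

Definition smooth_on {R : realType} {V W : normedModType R} (U : set V)
  (F : V -> W) : Prop :=
  open U /\
  (forall (vs : seq V) (v x : V), U x -> derivable (iterD vs F) x v) /\
  (forall (vs : seq V) (x : V), U x -> {for x, continuous (iterD vs F)}).

(* a smooth map  phi : delprod n -> sphere n  (restriction of a map that is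
   smooth on an open neighbourhood of delprod n in R^(n+1) x R^(n+1)) *)
Definition smooth_delprod_to_sphere {R : realType} (n : nat)
  (phi : 'rV[R]_n.+1 * 'rV[R]_n.+1 -> 'rV[R]_n.+1) : Prop :=
  (forall z, delprod n z -> sphere n (phi z)) /\
  exists U, delprod n `<=` U /\ smooth_on U phi.

(* phi is transversal to the submanifold {q, -q} of S^n (0-dimensional, so
   the differential must be onto the tangent space at every preimage point) *)
Definition transversal_S0 {R : realType} (n : nat)
  (phi : 'rV[R]_n.+1 * 'rV[R]_n.+1 -> 'rV[R]_n.+1) (q : 'rV[R]_n.+1) : Prop :=
  forall z, delprod n z -> (phi z = q \/ phi z = - q) ->
    forall w, tangent_sphere n (phi z) w ->
      exists v, tangent_delprod n z v /\ 'D_v phi z = w.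

Definition homotopic_on (R : realType) {X : topologicalType} (A : set X)
  (B : set X) (f g : X -> X) : Prop :=
  exists H : R * X -> X,
    {within `[0, 1]%classic `*` A, continuous H} /\
    (forall t x, `[0, 1]%classic t -> A x -> B (H (t, x))) /\
    (forall x, A x -> H (0, x) = f x) /\
    (forall x, A x -> H (1, x) = g x).

Definition homotopy_equivalence (R : realType) {X Y : topologicalType}
  (A : set X) (B : set Y) (f : X -> Y) : Prop :=
  {within A, continuous f} /\ (forall x, A x -> B (f x)) /\
  exists g : Y -> X,
    {within B, continuous g} /\ (forall y, B y -> A (g y)) /\
    homotopic_on R A A (g \o f) id /\ homotopic_on R B B (f \o g) id.

(* Main.v *)
Require Import Defs.
From HB Require Import structures.
From mathcomp Require Import all_boot all_order all_algebra.
From mathcomp Require Import all_classical all_reals all_analysis.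
From mathcomp Require Import ring lra.
Import Order.TTheory GRing.Theory Num.Theory.
Import numFieldNormedType.Exports.
Local Open Scope classical_set_scope.
Local Open Scope ring_scope.
Set Implicit Arguments.
Unset Strict Implicit.
Unset Printing Implicit Defensive.

Section Gen.
Variables (R : realType) (V : normedModType R).

Lemma derive_1P (W : normedModType R) (f : V -> W) x v :
  'D_v f x = 'D_1 (fun h : R => f (h *: v + x)) 0.
Proof.
rewrite /derive; set g1 := fun h => h^-1 *: _; set g2 := fun h => h^-1 *: _.
suff -> : g1 = g2 by [].
by rewrite funeqE /g1 /g2 => h /=; rewrite addr0 scale0r add0r [_%:A]mulr1.
Qed.

Lemma sqrt_comp_der (h : V -> R) x v : 0 < h x -> derivable h x v ->
  derivable (fun y => Num.sqrt (h y)) x v /\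
  'D_v (fun y => Num.sqrt (h y)) x = (2 * Num.sqrt (h x))^-1 * 'D_v h x.
Proof.
move=> hx dh.
have dg : is_derive (0:R) 1 (fun t : R => h (t *: v + x)) ('D_v h x).
  split; first exact: ((derivable1P _ _ _).1 dh).
  by rewrite -derive_1P.
have ds : is_derive ((fun t : R => h (t *: v + x)) 0) 1 (@Num.sqrt R)
   (2 * Num.sqrt (h x))^-1.
  by rewrite /= scale0r add0r; apply: is_derive1_sqrt.
have := is_derive1_comp ds dg => -[d1 d2].
split; first exact: ((derivable1P _ _ _).2 d1).
by rewrite derive_1P.
Qed.


Definition isq (r : R) := (Num.sqrt r)^-1.

Lemma isq_der (h : V -> R) x v : 0 < h x -> derivable h x v ->
  derivable (fun y => isq (h y)) x v /\
  'D_v (fun y => isq (h y)) x = (- 2^-1 * isq (h x) ^+ 3) * 'D_v h x.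
Proof.
move=> hx dh; have [d1 d2] := sqrt_comp_der hx dh.
have s0 : Num.sqrt (h x) != 0 by rewrite gt_eqF // sqrtr_gt0.
rewrite /isq; split; first exact: (@derivableV R V (fun y => Num.sqrt (h y)) x v s0 d1).
rewrite (@deriveV R V (fun y => Num.sqrt (h y)) x v s0 d1) d2.
set s := Num.sqrt (h x).
change (- s ^- 2 * ((2 * s)^-1 * 'D_v h x) = - 2^-1 * s^-1 ^+ 3 * 'D_v h x).
by rewrite exprVn; field.
Qed.

Definition good (U : set V) (P : (V -> R) -> Prop) := forall g : V -> R, P g ->
  (forall x : V, U x -> {for x, continuous g}) /\
  (forall x v : V, U x -> derivable g x v) /\
  (forall v : V, exists g' : V -> R, P g' /\ forall x : V, U x -> 'D_v g x = g' x).

Definition Sm U f := exists P, good U P /\ P f.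

Lemma Sm_good U : good U (Sm U).
Proof.
move=> g [P [gP Pg]]; have [c [d e]] := gP g Pg; split => //; split => // v.
have [g' [Pg' H]] := e v; exists g'; split => //; exists P; split => //.
Qed.

Inductive Cl (U : set V) (P : (V -> R) -> Prop) : (V -> R) -> Prop :=
| Cl_base f : P f -> Cl U P f
| Cl_cst c : Cl U P (fun _ => c)
| Cl_add f g : Cl U P f -> Cl U P g -> Cl U P (fun x => f x + g x)
| Cl_mul f g : Cl U P f -> Cl U P g -> Cl U P (fun x => f x * g x)
| Cl_isq f : Cl U P f -> (forall x, U x -> 0 < f x) -> Cl U P (fun x => isq (f x)).

Lemma Cl_good U P : good U P -> good U (Cl U P).
Proof.
move=> gP g; elim.
- move=> f Pf; have [c [d e]] := gP f Pf; split => //; split => // v.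
  have [g' [Pg' H]] := e v; exists g'; split => //; exact: Cl_base.
- move=> c; split; first by move=> x _; exact: cst_continuous.
  split; first by move=> x v _; exact: derivable_cst.
  move=> v; exists (fun _ => 0); split; first exact: Cl_cst.
  by move=> x _; rewrite derive_cst.
- move=> f h _ [cf [df ef]] _ [ch [dh eh]]; split.
    by move=> x Ux; apply: continuousD; [exact: cf|exact: ch].
  split; first by move=> x v Ux; apply: derivableD; [exact: df|exact: dh].
  move=> v; have [f' [Cf' Hf]] := ef v; have [h' [Ch' Hh]] := eh v.
  exists (fun x => f' x + h' x); split; first exact: Cl_add.
  move=> x Ux; rewrite (deriveD (df x v Ux) (dh x v Ux)) Hf // Hh //.
- move=> f h Cf [cf [df ef]] Ch [ch [dh eh]]; split.
    by move=> x Ux; apply: continuousM; [exact: cf|exact: ch].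
  split; first by move=> x v Ux; apply: derivableM; [exact: df|exact: dh].
  move=> v; have [f' [Cf' Hf]] := ef v; have [h' [Ch' Hh]] := eh v.
  exists (fun x => f x * h' x + h x * f' x); split.
    by apply: Cl_add; apply: Cl_mul.
  move=> x Ux; rewrite (deriveM (df x v Ux) (dh x v Ux)) Hf // Hh //.
- move=> f Cf [cf [df ef]] fpos; split.
    move=> x Ux; apply: continuousV.
      by rewrite gt_eqF // sqrtr_gt0 fpos.
    apply: continuous_comp; first exact: cf.
    exact: sqrt_continuous.
  split; first by move=> x v Ux; exact: (isq_der (fpos x Ux) (df x v Ux)).1.
  move=> v; have [f' [Cf' Hf]] := ef v.
  exists (fun x => (- 2^-1 * (isq (f x) * (isq (f x) * isq (f x)))) * f' x).
  split.
    apply: Cl_mul => //; apply: Cl_mul; first exact: Cl_cst.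
    by apply: Cl_mul; [|apply: Cl_mul]; apply: Cl_isq.
  by move=> x Ux; rewrite (isq_der (fpos x Ux) (df x v Ux)).2 Hf // !exprS expr0 mulr1.
Qed.

Lemma Sm_Cl U f : Cl U (Sm U) f -> Sm U f.
Proof. by move=> C; exists (Cl U (Sm U)); split => //; apply: Cl_good; exact: Sm_good. Qed.

Lemma Sm_lin U (l : V -> R) : continuous l -> (forall x v, is_derive x v l (l v)) ->
  Sm U l.
Proof.
move=> cl dl; exists (fun g => g = l \/ exists c : R, g = fun _ => c); split; last by left.
move=> g [->|[c ->]].
  split; first by move=> x _; exact: cl.
  split; first by move=> x v _; exact: (dl x v).(ex_derive).
  move=> v; exists (fun _ => l v); split; first by right; exists (l v).
  by move=> x _; exact: (dl x v).(derive_val).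
split; first by move=> x _; exact: cst_continuous.
split; first by move=> x v _; exact: derivable_cst.
move=> v; exists (fun _ => 0); split; first by right; exists 0.
by move=> x _; rewrite derive_cst.
Qed.

Lemma near_cont (f g : V -> R) x : (\near x, f x = g x) ->
  {for x, continuous g} -> {for x, continuous f}.
Proof.
move=> fg cg; rewrite /prop_for /continuous_at.
have -> : f x = g x by exact: (nbhs_singleton fg).
apply: cvg_trans cg; apply: near_eq_cvg.
by near do apply/esym.
Unshelve. all: by end_near. Qed.

Lemma Sm_iter U f : open U -> Sm U f -> forall vs : seq V, exists g, Sm U g /\
  forall x, U x -> Defs.iterD vs f x = g x.
Proof.
move=> oU Sf; elim => [|v vs [g [Sg H]]]; first by exists f.
have [_ [_ e]] := Sm_good Sg; have [g' [Sg' Hg]] := e v.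
exists g'; split => // x Ux /=.
rewrite -Hg //; apply: near_eq_derive.
have : nbhs x U by apply: open_nbhs_nbhs.
by apply: filterS => y Uy; apply: H.
Qed.

Lemma Sm_smooth U f : open U -> Sm U f -> forall (vs : seq V) x, U x ->
  (forall v, derivable (Defs.iterD vs f) x v) /\ {for x, continuous (Defs.iterD vs f)}.
Proof.
move=> oU Sf vs x Ux; have [g [Sg H]] := Sm_iter oU Sf vs.
have [cg [dg _]] := Sm_good Sg.
have nx : \near x, Defs.iterD vs f x = g x.
  have : nbhs x U by apply: open_nbhs_nbhs.
  by apply: filterS => y Uy; apply: H.
split.
  move=> v; apply: (near_eq_derivable _ (dg x v Ux)).
  by near do apply/esym.
exact: (near_cont nx (cg x Ux)).
Unshelve. all: by end_near. Qed.


Lemma lin_is_derive (l : V -> R) x v : (forall a b, l (a + b) = l a + l b) ->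
  (forall k a, l (k *: a) = k * l a) -> is_derive x v l (l v).
Proof.
move=> la ls.
have E : \forall h \near (0:R)^', h^-1 *: ((l \o shift x) (h *: v) - l x) = l v.
  near=> h.
  have hn0 : h != 0 by near: h; exact: nbhs_dnbhs_neq.
  rewrite /= la ls addrK.
  by change (h^-1 * (h * l v) = l v); rewrite mulKf.
split; first exact: (is_cvg_near_cst _ E).
exact: (lim_near_cst _ E).
Unshelve. all: by end_near. Qed.

Lemma Sm_cst U c : Sm U (fun _ => c).
Proof. by apply: Sm_Cl; apply: Cl_cst. Qed.
Lemma SmD U f g : Sm U f -> Sm U g -> Sm U (fun x => f x + g x).
Proof. by move=> a b; apply: Sm_Cl; apply: Cl_add; apply: Cl_base. Qed.
Lemma SmM U f g : Sm U f -> Sm U g -> Sm U (fun x => f x * g x).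
Proof. by move=> a b; apply: Sm_Cl; apply: Cl_mul; apply: Cl_base. Qed.
Lemma SmN U f : Sm U f -> Sm U (fun x => - f x).
Proof.
move=> a; have := SmM (Sm_cst U (-1)) a.
by congr Sm; apply/funext => x; rewrite mulN1r.
Qed.
Lemma SmB U f g : Sm U f -> Sm U g -> Sm U (fun x => f x - g x).
Proof. by move=> a b; apply: SmD => //; apply: SmN. Qed.
Lemma Sm_isq U f : Sm U f -> (forall x, U x -> 0 < f x) -> Sm U (fun x => isq (f x)).
Proof. by move=> a b; apply: Sm_Cl; apply: Cl_isq => //; apply: Cl_base. Qed.
Lemma Sm_sum U m (F : 'I_m -> V -> R) : (forall i, Sm U (F i)) ->
  Sm U (fun x => \sum_(i < m) F i x).
Proof.
elim: m F => [|m IH] F HF.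
  by under eq_fun do rewrite big_ord0; apply: Sm_cst.
under eq_fun do rewrite big_ord_recr /=.
apply: SmD => //; exact: (IH (fun i => F (widen_ord (leqnSn m) i))).
Qed.

Definition SmV U m (A : V -> 'rV[R]_m) := forall j, Sm U (fun x => A x 0 j).

Lemma SmV_cst U m (c : 'rV[R]_m) : SmV U (fun _ => c).
Proof. by move=> j; apply: Sm_cst. Qed.
Lemma SmV_add U m (A B : V -> 'rV[R]_m) : SmV U A -> SmV U B -> SmV U (fun x => A x + B x).
Proof. by move=> a b j; under eq_fun do rewrite mxE; apply: SmD. Qed.
Lemma SmV_opp U m (A : V -> 'rV[R]_m) : SmV U A -> SmV U (fun x => - A x).
Proof. by move=> a j; under eq_fun do rewrite mxE; apply: SmN. Qed.
Lemma SmV_sub U m (A B : V -> 'rV[R]_m) : SmV U A -> SmV U B -> SmV U (fun x => A x - B x).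
Proof. by move=> a b; apply: SmV_add => //; apply: SmV_opp. Qed.
Lemma SmV_scale U m k (A : V -> 'rV[R]_m) : Sm U k -> SmV U A -> SmV U (fun x => k x *: A x).
Proof. by move=> a b j; under eq_fun do rewrite mxE; apply: SmM. Qed.
Lemma Sm_dot U m (A B : V -> 'rV[R]_m) : SmV U A -> SmV U B -> Sm U (fun x => dotp (A x) (B x)).
Proof. by move=> a b; rewrite /dotp; apply: Sm_sum => i; apply: SmM. Qed.


End Gen.

Section MxCont.
Variable (R : realType).

Lemma cont_sum (T : topologicalType) (W : normedModType R) m (F : 'I_m -> T -> W) x :
  (forall i, {for x, continuous (F i)}) -> {for x, continuous (fun z => \sum_(i < m) F i z)}.
Proof.
elim: m F => [|m IH] F HF.
  have -> : (fun z => \sum_(i < 0) F i z) = (fun _ => 0).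
    by apply/funext => z; rewrite big_ord0.
  exact: cst_continuous.
have -> : (fun z => \sum_(i < m.+1) F i z) =
    (fun z => \sum_(i < m) F (widen_ord (leqnSn m) i) z + F ord_max z).
  by apply/funext => z; rewrite big_ord_recr.
apply: continuousD => //; exact: (IH (fun i => F (widen_ord (leqnSn m) i))).
Qed.

Lemma mx_cont (T : topologicalType) a b (G : 'I_a -> 'I_b -> T -> R) x :
  (forall i j, {for x, continuous (G i j)}) ->
  {for x, continuous (fun z => \matrix_(i, j) G i j z : 'M[R]_(a, b))}.
Proof.
move=> HG.
have -> : (fun z => \matrix_(i, j) G i j z : 'M[R]_(a, b)) =
   (fun z => \sum_(i < a) \sum_(j < b) G i j z *: (delta_mx i j : 'M[R]_(a, b))).
  apply/funext => z; rewrite {1}(matrix_sum_delta (\matrix_(i, j) G i j z)).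
  by apply: eq_bigr => i _; apply: eq_bigr => j _; rewrite mxE.
apply: cont_sum => i; apply: cont_sum => j.
exact: continuousZr_tmp.
Qed.

Lemma near_contW (T : topologicalType) (W : normedModType R) (f g : T -> W) x :
  (\near x, f x = g x) -> {for x, continuous g} -> {for x, continuous f}.
Proof.
move=> fg cg; rewrite /prop_for /continuous_at.
have -> : f x = g x by exact: (nbhs_singleton fg).
apply: cvg_trans cg; apply: near_eq_cvg.
by near do apply/esym.
Unshelve. all: by end_near. Qed.

Variable (V : normedModType R).

Lemma SmM_iter (U : set V) a b (M : V -> 'M[R]_(a, b)) : open U ->
  (forall i j, Sm U (fun z => M z i j)) -> forall vs : seq V,
  exists G : 'I_a -> 'I_b -> V -> R, (forall i j, Sm U (G i j)) /\
    forall x, U x -> Defs.iterD vs M x = \matrix_(i, j) G i j x.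
Proof.
move=> oU SM; elim => [|v vs [G [SG HG]]].
  exists (fun i j z => M z i j); split => // x _.
  by apply/matrixP => i j; rewrite mxE.
have : forall ij : 'I_a * 'I_b, exists g', Sm U g' /\
    forall x, U x -> 'D_v (G ij.1 ij.2) x = g' x.
  by move=> ij; have [_ [_ e]] := Sm_good (SG ij.1 ij.2); exact: e.
move=> /boolp.choice [G' HG'].
exists (fun i j => G' (i, j)); split; first by move=> i j; exact: (HG' (i, j)).1.
move=> x Ux /=.
have nx : \near x, Defs.iterD vs M x = \matrix_(i, j) G i j x.
  have : nbhs x U by apply: open_nbhs_nbhs.
  by apply: filterS => y Uy; apply: HG.
rewrite (near_eq_derive _ nx).
have dG : forall i j, derivable (fun t => (\matrix_(i, j) G i j t : 'M[R]_(a, b)) i j) x v.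
  move=> i j; under eq_fun do rewrite mxE.
  by have [_ [d _]] := Sm_good (SG i j); exact: d.
rewrite derive_mx; last by apply/derivable_mxP.
apply/matrixP => i j; rewrite !mxE.
under eq_fun do rewrite mxE.
exact: (HG' (i, j)).2.
Qed.

Lemma SmM_smooth (U : set V) a b (M : V -> 'M[R]_(a, b)) : open U ->
  (forall i j, Sm U (fun z => M z i j)) -> smooth_on U M.
Proof.
move=> oU SM; split => //; split.
  move=> vs v x Ux; have [G [SG HG]] := SmM_iter oU SM vs.
  have nx : \near x, (fun t => \matrix_(i, j) G i j t : 'M[R]_(a, b)) x = Defs.iterD vs M x.
    have : nbhs x U by apply: open_nbhs_nbhs.
    by apply: filterS => y Uy; rewrite HG.
  apply: (near_eq_derivable nx); apply/derivable_mxP => i j.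
  under eq_fun do rewrite mxE.
  by have [_ [d _]] := Sm_good (SG i j); exact: d.
move=> vs x Ux; have [G [SG HG]] := SmM_iter oU SM vs.
have nx : \near x, Defs.iterD vs M x = (fun t => \matrix_(i, j) G i j t : 'M[R]_(a, b)) x.
  have : nbhs x U by apply: open_nbhs_nbhs.
  by apply: filterS => y Uy; rewrite HG.
apply: (near_contW nx); apply: mx_cont => i j.
by have [c _] := Sm_good (SG i j); exact: c.
Qed.

End MxCont.

Section Geo.
Variables (R : realType) (m : nat).
Implicit Types (u v w x y : 'rV[R]_m).

Lemma dotpC u v : dotp u v = dotp v u.
Proof. by rewrite /dotp; apply: eq_bigr => i _; rewrite mulrC. Qed.
Lemma dotpDl u v w : dotp (u + v) w = dotp u w + dotp v w.
Proof. by rewrite /dotp -big_split; apply: eq_bigr => i _; rewrite mxE mulrDl. Qed.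
Lemma dotpDr u v w : dotp w (u + v) = dotp w u + dotp w v.
Proof. by rewrite dotpC dotpDl !(dotpC w). Qed.
Lemma dotpZl k u v : dotp (k *: u) v = k * dotp u v.
Proof. by rewrite /dotp mulr_sumr; apply: eq_bigr => i _; rewrite mxE mulrA. Qed.
Lemma dotpZr k u v : dotp v (k *: u) = k * dotp v u.
Proof. by rewrite dotpC dotpZl dotpC. Qed.
Lemma dotpNl u v : dotp (- u) v = - dotp u v.
Proof. by rewrite -scaleN1r dotpZl mulN1r. Qed.
Lemma dotpNr u v : dotp v (- u) = - dotp v u.
Proof. by rewrite dotpC dotpNl dotpC. Qed.
Lemma dotpBl u v w : dotp (u - v) w = dotp u w - dotp v w.
Proof. by rewrite dotpDl dotpNl. Qed.
Lemma dotpBr u v w : dotp w (u - v) = dotp w u - dotp w v.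
Proof. by rewrite dotpDr dotpNr. Qed.
Lemma dotp0l u : dotp 0 u = 0.
Proof. by rewrite -(scale0r (0 : 'rV[R]_m)) dotpZl mul0r. Qed.
Lemma dotp0r u : dotp u 0 = 0.
Proof. by rewrite dotpC dotp0l. Qed.
Lemma dotp_ge0 u : 0 <= dotp u u.
Proof. by rewrite /dotp; apply: sumr_ge0 => i _; rewrite -expr2 sqr_ge0. Qed.
Lemma dotp_eq0 u : dotp u u = 0 -> u = 0.
Proof.
move=> H; apply/matrixP => i j; rewrite mxE (ord1 i).
have nn : forall k : 'I_m, true -> 0 <= u 0 k * u 0 k.
  by move=> k _; rewrite -expr2 sqr_ge0.
have := @psumr_eq0P R _ xpredT (fun j => u 0 j * u 0 j) nn H j isT.
by move=> /eqP; rewrite mulf_eq0 orbb => /eqP.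
Qed.
Lemma dotp_gt0 u : u != 0 -> 0 < dotp u u.
Proof.
move=> u0; rewrite lt_neqAle dotp_ge0 andbT eq_sym.
by apply/eqP => /dotp_eq0 H; move: u0; rewrite H eqxx.
Qed.

Lemma sub_dotp x p : dotp x x = 1 -> dotp p p = 1 ->
  dotp (x - p) (x - p) = 2 - 2 * dotp x p.
Proof.
move=> hx hp; rewrite !dotpBl !dotpBr hx hp (dotpC p x); ring.
Qed.

Lemma dot_le1 x p : dotp x x = 1 -> dotp p p = 1 -> dotp x p <= 1.
Proof.
move=> hx hp; have := dotp_ge0 (x - p); rewrite sub_dotp //; lra.
Qed.

Lemma dot_eq1 x p : dotp x x = 1 -> dotp p p = 1 -> dotp x p = 1 -> x = p.
Proof.
move=> hx hp h1; apply/eqP; rewrite -subr_eq0; apply/eqP/dotp_eq0.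
rewrite sub_dotp // h1; ring.
Qed.

Lemma key_par x y c1 c2 : dotp x x = 1 -> dotp y y = 1 -> x <> y ->
  0 <= c1 -> 0 <= c2 -> c1 *: x = c2 *: y -> c1 = 0 /\ c2 = 0.
Proof.
move=> hx hy xy c10 c20 E.
have E2 : c1 ^+ 2 = c2 ^+ 2.
  have : dotp (c1 *: x) (c1 *: x) = dotp (c2 *: y) (c2 *: y) by rewrite E.
  by rewrite !dotpZl !dotpZr hx hy !mulr1 -!expr2.
have c12 : c1 = c2.
  move/eqP: E2; rewrite -subr_eq0 subr_sqr mulf_eq0 => /orP[/eqP|/eqP]; lra.
subst c2.
have : c1 * dotp (x - y) (x - y) = 0.
  by rewrite -dotpZl scalerBr E subrr dotp0l.
move/eqP; rewrite mulf_eq0 => /orP[/eqP -> //|/eqP /dotp_eq0 /eqP].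
by rewrite subr_eq0 => /eqP.
Qed.

Definition N w := isq (dotp w w) *: w.

Lemma isq_gt0 (r : R) : 0 < r -> 0 < isq r.
Proof. by move=> r0; rewrite /isq invr_gt0 sqrtr_gt0. Qed.

Lemma N_sphere w : w != 0 -> dotp (N w) (N w) = 1.
Proof.
move=> w0; have Q0 := dotp_gt0 w0.
rewrite /N dotpZl dotpZr mulrA /isq -invfM -expr2 sqr_sqrtr ?ltW //.
by rewrite mulVf // gt_eqF.
Qed.

Lemma N_unit w : dotp w w = 1 -> N w = w.
Proof. by move=> h; rewrite /N h /isq sqrtr1 invr1 scale1r. Qed.

Lemma N_scale c w : 0 < c -> N (c *: w) = N w.
Proof.
move=> c0; rewrite /N dotpZl dotpZr mulrA -expr2 /isq sqrtrM ?sqr_ge0 //.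
rewrite sqrtr_sqr gtr0_norm // scalerA; congr (_ *: _).
by rewrite invfM mulrAC mulVf ?gt_eqF // mul1r.
Qed.

Lemma N_opp w : N (- w) = - N w.
Proof. by rewrite /N dotpNl dotpNr opprK scalerN. Qed.

Lemma N_eq a b : a != 0 -> b != 0 -> N a = N b -> exists k, 0 < k /\ a = k *: b.
Proof.
move=> a0 b0 E; have Qa := dotp_gt0 a0; have Qb := dotp_gt0 b0.
exists ((isq (dotp a a))^-1 * isq (dotp b b)); split.
  by apply: mulr_gt0; [rewrite invr_gt0|]; apply: isq_gt0.
rewrite -scalerA -/(N b) -E /N scalerA mulVf ?scale1r //.
by rewrite gt_eqF // isq_gt0.
Qed.

End Geo.

Section SmGeo.
Variables (R : realType) (V : normedModType R) (m : nat) (p : 'rV[R]_m).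

Definition Fxy (x y : 'rV[R]_m) := (1 - dotp y p) *: x - (1 - dotp x p) *: y.

Lemma SmV_F (U : set V) (X Y : V -> 'rV[R]_m) : SmV U X -> SmV U Y -> SmV U (fun z => Fxy (X z) (Y z)).
Proof.
move=> hX hY; apply: SmV_sub; apply: SmV_scale => //;
  (apply: SmB; [exact: Sm_cst| apply: Sm_dot => //; exact: SmV_cst]).
Qed.

Lemma SmV_N (U : set V) (A : V -> 'rV[R]_m) : SmV U A -> (forall z, U z -> A z != 0) -> SmV U (fun z => N (A z)).
Proof.
move=> hA nz; apply: SmV_scale => //; apply: Sm_isq; first exact: Sm_dot.
by move=> z Uz; apply: dotp_gt0; apply: nz.
Qed.

Lemma SmV_cont (U : set V) (A : V -> 'rV[R]_m) z : SmV U A -> U z -> {for z, continuous A}.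
Proof.
move=> hA Uz.
have -> : A = (fun t => \matrix_(i, j) (fun (i : 'I_1) (j : 'I_m) t => A t 0 j) i j t).
  by apply/funext => t; apply/matrixP => i j; rewrite mxE (ord1 i).
apply: mx_cont => i j; have [c _] := Sm_good (hA j); exact: c.
Qed.

Lemma Sm_cont (U : set V) f z : Sm U f -> U z -> {for z, continuous f}.
Proof. by move=> hf Uz; have [c _] := Sm_good hf; exact: c. Qed.

End SmGeo.

Section Coords.
Variables (R : realType) (m : nat).
Notation Vt := 'rV[R]_m.

Lemma SmV_fst (U : set (Vt * Vt)) : SmV U (fun z => z.1).
Proof.
move=> j; apply: Sm_lin.
  move=> z; apply: (@continuous_comp _ _ _ fst (fun M : Vt => M 0 j)).
    exact: cvg_fst.
  exact: coord_continuous.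
by move=> x v; apply: lin_is_derive => [a b|k a] /=; rewrite mxE.
Qed.

Lemma SmV_snd (U : set (Vt * Vt)) : SmV U (fun z => z.2).
Proof.
move=> j; apply: Sm_lin.
  move=> z; apply: (@continuous_comp _ _ _ snd (fun M : Vt => M 0 j)).
    exact: cvg_snd.
  exact: coord_continuous.
by move=> x v; apply: lin_is_derive => [a b|k a] /=; rewrite mxE.
Qed.

Lemma SmV_fst' (U : set (R * (Vt * Vt))) : SmV U (fun z => z.2.1).
Proof.
move=> j; apply: Sm_lin.
  move=> z; apply: (@continuous_comp _ _ _ (fun z : R * (Vt * Vt) => z.2.1) (fun M : Vt => M 0 j)).
    apply: (@continuous_comp _ _ _ snd fst); [exact: cvg_snd| exact: cvg_fst].
  exact: coord_continuous.
by move=> x v; apply: lin_is_derive => [a b|k a] /=; rewrite mxE.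
Qed.

Lemma SmV_snd' (U : set (R * (Vt * Vt))) : SmV U (fun z => z.2.2).
Proof.
move=> j; apply: Sm_lin.
  move=> z; apply: (@continuous_comp _ _ _ (fun z : R * (Vt * Vt) => z.2.2) (fun M : Vt => M 0 j)).
    apply: (@continuous_comp _ _ _ snd snd); [exact: cvg_snd| exact: cvg_snd].
  exact: coord_continuous.
by move=> x v; apply: lin_is_derive => [a b|k a] /=; rewrite mxE.
Qed.

Lemma Sm_lam (U : set (R * (Vt * Vt))) : Sm U (fun z => z.1).
Proof.
apply: Sm_lin; first by move=> z; exact: cvg_fst.
by move=> x v; apply: lin_is_derive.
Qed.

End Coords.

Section Main.
Variables (R : realType) (n : nat) (p : 'rV[R]_n.+1).
Hypothesis hp : dotp p p = 1.
Notation Vt := 'rV[R]_n.+1.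
Implicit Types (x y w : Vt).

Lemma F_neq0 x y : dotp x x = 1 -> dotp y y = 1 -> x <> y -> Fxy p x y != 0.
Proof.
move=> hx hy xy; apply/eqP => F0.
have E : (1 - dotp y p) *: x = (1 - dotp x p) *: y.
  by apply/eqP; rewrite -subr_eq0; apply/eqP.
have t1 := dot_le1 hy hp; have s1 := dot_le1 hx hp.
have c1 : 0 <= 1 - dotp y p by rewrite subr_ge0.
have c2 : 0 <= 1 - dotp x p by rewrite subr_ge0.
have [a b] := key_par hx hy xy c1 c2 E.
have ex : x = p by apply: dot_eq1 => //; lra.
have ey : y = p by apply: dot_eq1 => //; lra.
by apply: xy; rewrite ex ey.
Qed.

Lemma F_tau x y : Fxy p y x = - Fxy p x y.
Proof. by rewrite /Fxy opprB. Qed.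

Lemma F_anti w : dotp w w = 1 -> N (Fxy p w (- w)) = w.
Proof.
move=> hw; have -> : Fxy p w (- w) = 2 *: w.
  by apply/matrixP => i j; rewrite /Fxy dotpNl !mxE; ring.
by rewrite N_scale ?ltr0n // N_unit.
Qed.


Lemma neq_p_lt x : dotp x x = 1 -> x <> p -> dotp x p < 1.
Proof.
move=> hx xp; rewrite lt_neqAle (dot_le1 hx hp) andbT.
by apply/eqP => h; apply: xp; exact: dot_eq1.
Qed.

Lemma pre_fwd x y : dotp x x = 1 -> dotp y y = 1 -> x <> y ->
  N (Fxy p x y) = p \/ N (Fxy p x y) = - p -> x = p \/ y = p.
Proof.
move=> hx hy xy HE.
have F0 := F_neq0 hx hy xy.
set F := Fxy p x y in HE F0.
have k0 : isq (dotp F F) != 0 by rewrite gt_eqF // isq_gt0 // dotp_gt0.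
have [mu Fmu] : exists mu, F = mu *: p.
  case: HE => E.
    exists (isq (dotp F F))^-1.
    by rewrite -E /N scalerA mulVf // scale1r.
  exists (- (isq (dotp F F))^-1).
  by rewrite scaleNr -scalerN -E /N scalerA mulVf // scale1r.
set s := dotp x p; set t := dotp y p.
have mus : mu = s - t.
  have : dotp F p = mu * dotp p p by rewrite Fmu dotpZl.
  rewrite hp mulr1 /F /Fxy dotpBl !dotpZl -/s -/t => <-; ring.
have V0 : (1 - t) *: (x - p) = (1 - s) *: (y - p).
  apply/eqP; rewrite -subr_eq0; apply/eqP.
  have -> : (1 - t) *: (x - p) - (1 - s) *: (y - p) = F - (s - t) *: p.
    by apply/matrixP => i j; rewrite /F /Fxy -/s -/t !mxE; ring.
  by rewrite Fmu mus subrr.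
have Eq : (1 - t) ^+ 2 * (2 - 2 * s) = (1 - s) ^+ 2 * (2 - 2 * t).
  have : dotp ((1 - t) *: (x - p)) ((1 - t) *: (x - p)) =
         dotp ((1 - s) *: (y - p)) ((1 - s) *: (y - p)) by rewrite V0.
  by rewrite !dotpZl !dotpZr !sub_dotp // -/s -/t !mulrA -!expr2.
have : 2 * ((1 - t) * (1 - s) * (s - t)) = 0.
  have : (1 - t) ^+ 2 * (2 - 2 * s) - (1 - s) ^+ 2 * (2 - 2 * t) = 0 by rewrite Eq subrr.
  by move=> <-; ring.
move/eqP; rewrite !mulf_eq0 pnatr_eq0 /= => /orP[/orP[]|] /eqP h.
- by right; apply: dot_eq1 => //; rewrite -/t; lra.
- by left; apply: dot_eq1 => //; rewrite -/s; lra.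
- have st : s = t by lra.
  have : (1 - t) * dotp (x - y) (x - y) = 0.
    rewrite -dotpZl.
    have -> : (1 - t) *: (x - y) = (1 - t) *: (x - p) - (1 - s) *: (y - p).
      by apply/matrixP => i j; rewrite !mxE st; ring.
    by rewrite V0 subrr dotp0l.
  move/eqP; rewrite mulf_eq0 => /orP[/eqP h1|/eqP /dotp_eq0 /eqP].
    by right; apply: dot_eq1 => //; rewrite -/t; lra.
  by rewrite subr_eq0 => /eqP.
Qed.

Lemma pre_bwd1 y : dotp y y = 1 -> y <> p -> N (Fxy p p y) = p.
Proof.
move=> hy yp; have t1 := neq_p_lt hy yp.
have -> : Fxy p p y = (1 - dotp y p) *: p.
  by rewrite /Fxy hp subrr scale0r subr0.
by rewrite N_scale ?subr_gt0 // N_unit.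
Qed.

Lemma pre_bwd2 x : dotp x x = 1 -> x <> p -> N (Fxy p x p) = - p.
Proof. by move=> hx xp; rewrite F_tau N_opp pre_bwd1. Qed.


Section Hom.
Variables (x y : Vt) (l : R).
Hypotheses (hx : dotp x x = 1) (hy : dotp y y = 1) (xy : x <> y) (l0 : 0 <= l) (l1 : l <= 1).
Let contra_st : dotp x p = 1 -> dotp y p = 1 -> False.
Proof.
move=> hs ht; apply: xy; rewrite (dot_eq1 hx hp hs); exact/esym/(dot_eq1 hy hp ht).
Qed.

Definition hA := l *: x + (1 - l) *: Fxy p x y.
Definition hB := l *: y - (1 - l) *: Fxy p x y.

Lemma hA_neq0 : hA != 0.
Proof.
have S1 := dot_le1 hx hp; have T1 := dot_le1 hy hp.
apply/eqP => A0.
have E : (l + (1 - l) * (1 - dotp y p)) *: x = ((1 - l) * (1 - dotp x p)) *: y.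
  apply/eqP; rewrite -subr_eq0 -A0; apply/eqP.
  by apply/matrixP => i j; rewrite /hA /Fxy !mxE; ring.
have p1 : 0 <= (1 - l) * (1 - dotp y p) by apply: mulr_ge0; rewrite subr_ge0.
have p2 : 0 <= (1 - l) * (1 - dotp x p) by apply: mulr_ge0; rewrite subr_ge0.
have [a b] := key_par hx hy xy (addr_ge0 l0 p1) p2 E.
have ll : l = 0 by apply/eqP; rewrite eq_le l0 andbT -a lerDl.
move: a b; rewrite ll subr0 !mul1r add0r => a b.
apply: contra_st; lra.
Qed.

Lemma hB_neq0 : hB != 0.
Proof.
have S1 := dot_le1 hx hp; have T1 := dot_le1 hy hp.
apply/eqP => B0.
have E : ((1 - l) * (1 - dotp y p)) *: x = (l + (1 - l) * (1 - dotp x p)) *: y.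
  apply/eqP; rewrite -subr_eq0 -oppr_eq0 -B0; apply/eqP.
  by apply/matrixP => i j; rewrite /hB /Fxy !mxE; ring.
have p1 : 0 <= (1 - l) * (1 - dotp y p) by apply: mulr_ge0; rewrite subr_ge0.
have p2 : 0 <= (1 - l) * (1 - dotp x p) by apply: mulr_ge0; rewrite subr_ge0.
have [a b] := key_par hx hy xy p1 (addr_ge0 l0 p2) E.
have ll : l = 0 by apply/eqP; rewrite eq_le l0 andbT -b lerDl.
move: a b; rewrite ll subr0 !mul1r add0r => a b.
apply: contra_st; lra.
Qed.

Lemma hAB : N hA <> N hB.
Proof.
have S1 := dot_le1 hx hp; have T1 := dot_le1 hy hp.
move=> E; have [k [k0 Ek]] := N_eq hA_neq0 hB_neq0 E.
have E2 : (l + (1 + k) * ((1 - l) * (1 - dotp y p))) *: x =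
          (k * l + (1 + k) * ((1 - l) * (1 - dotp x p))) *: y.
  apply/eqP; rewrite -subr_eq0; apply/eqP.
  have -> : 0 = hA - k *: hB by rewrite Ek subrr.
  by apply/matrixP => i j; rewrite /hA /hB /Fxy !mxE; ring.
have p1 : 0 <= (1 - l) * (1 - dotp y p) by apply: mulr_ge0; rewrite subr_ge0.
have p2 : 0 <= (1 - l) * (1 - dotp x p) by apply: mulr_ge0; rewrite subr_ge0.
have q1 : 0 <= (1 + k) * ((1 - l) * (1 - dotp y p)) by apply: mulr_ge0 => //; apply: addr_ge0 => //; exact: ltW.
have q2 : 0 <= (1 + k) * ((1 - l) * (1 - dotp x p)) by apply: mulr_ge0 => //; apply: addr_ge0 => //; exact: ltW.
have [a b] := key_par hx hy xy (addr_ge0 l0 q1) (addr_ge0 (mulr_ge0 (ltW k0) l0) q2) E2.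
have ll : l = 0 by apply/eqP; rewrite eq_le l0 andbT -a lerDl.
move: a b; rewrite ll mulr0 subr0 !mul1r !add0r => /eqP a /eqP b.
move: a b; rewrite !mulf_eq0 => /orP[/eqP a|/eqP a] /orP[/eqP b|/eqP b]; try lra.
apply: contra_st; lra.
Qed.

End Hom.

End Main.

Section LineDer.
Variable R : realType.

Lemma line_der (a b c : R) : 0 <= c ->
  'D_1 (fun h : R => (a + h * b) * isq (1 + h ^+ 2 * c)) 0 = b.
Proof.
move=> c0.
have lb : forall x : R, is_derive x (1 : R) (fun h : R => h * b) b.
  move=> x; have := @lin_is_derive R R (fun h : R => h * b) x 1.
  by rewrite mul1r; apply => [u v|k u]; rewrite ?mulrDl ?mulrA.
have lc : forall x : R, is_derive x (1 : R) (fun h : R => h * c) c.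
  move=> x; have := @lin_is_derive R R (fun h : R => h * c) x 1.
  by rewrite mul1r; apply => [u v|k u]; rewrite ?mulrDl ?mulrA.
have D1 : is_derive (0:R) (1:R) (fun h : R => a + h * b) (0 + b).
  by apply: is_deriveD; try exact: lb; exact: is_derive_cst.
have D2a : is_derive (0:R) (1:R) (fun h : R => h * (h * c)) (0 *: c + (0 * c) *: 1).
  by apply: is_deriveM; try exact: lc; exact: is_derive_id.
have D2 : is_derive (0:R) (1:R) (fun h : R => 1 + h ^+ 2 * c) (0 + (0 *: c + (0 * c) *: 1)).
  have -> : (fun h : R => 1 + h ^+ 2 * c) = (fun h => 1 + h * (h * c)).
    by apply/funext => h; rewrite expr2 mulrA.
  by apply: is_deriveD; try exact: D2a; exact: is_derive_cst.
have pos : 0 < 1 + (0:R) ^+ 2 * c by rewrite expr0n /= mul0r addr0.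
have [d3 D3] := @isq_der R R (fun h : R => 1 + h ^+ 2 * c) 0 1 pos D2.(ex_derive).
have D3' : is_derive (0:R) (1:R) (fun h : R => isq (1 + h ^+ 2 * c))
   ((- 2^-1 * isq (1 + 0 ^+ 2 * c) ^+ 3) * (0 + (0 *: c + (0 * c) *: 1))).
  by split => //; rewrite D3 D2.(derive_val).
have D4 : is_derive (0:R) (1:R) (fun h : R => (a + h * b) * isq (1 + h ^+ 2 * c))
  ((a + 0 * b) *: ((- 2^-1 * isq (1 + 0 ^+ 2 * c) ^+ 3) * (0 + (0 *: c + (0 * c) *: 1)))
    + isq (1 + 0 ^+ 2 * c) *: (0 + b)).
  by apply: is_deriveM; try exact: D1; exact: D3'.
rewrite D4.(derive_val).
rewrite expr0n /= !mul0r !addr0 /isq sqrtr1 invr1.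
by rewrite !(scale0r, addr0, add0r, mulr0, scaler0, scale1r).
Qed.

End LineDer.

Lemma cont_pair (T U W : topologicalType) (f : T -> U) (g : T -> W) x :
  {for x, continuous f} -> {for x, continuous g} -> {for x, continuous (fun z => (f z, g z))}.
Proof.
move=> hf hg; rewrite /prop_for /continuous_at.
exact: (@cvg_pair _ _ _ (nbhs x) (nbhs (f x)) (nbhs (g x)) _ _ _ f g hf hg).
Qed.

Section Final.
Variables (R : realType) (n : nat) (p : 'rV[R]_n.+1).
Hypothesis hp : dotp p p = 1.
Notation Vt := 'rV[R]_n.+1.

Definition phi (z : Vt * Vt) : Vt := N (Fxy p z.1 z.2).
Definition Uo : set (Vt * Vt) := [set z | 0 < dotp (Fxy p z.1 z.2) (Fxy p z.1 z.2)].

Lemma Uo_open : open Uo.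
Proof.
have SQ : Sm setT (fun z : Vt * Vt => dotp (Fxy p z.1 z.2) (Fxy p z.1 z.2)).
  by apply: Sm_dot; apply: SmV_F; [exact: SmV_fst|exact: SmV_snd|exact: SmV_fst|exact: SmV_snd].
apply: (@open_comp _ _ (fun z : Vt * Vt => dotp (Fxy p z.1 z.2) (Fxy p z.1 z.2)) [set x : R | 0 < x]).
  by move=> z _; apply: (Sm_cont SQ).
exact: open_gt.
Qed.

Lemma SmV_phi : SmV Uo phi.
Proof.
apply: SmV_N; first by apply: SmV_F; [exact: SmV_fst|exact: SmV_snd].
move=> z; rewrite /Uo /= => h; apply/eqP => F0; move: h; rewrite F0 dotp0l ltxx.
by [].
Qed.

Lemma phi_smooth : smooth_on Uo phi.
Proof.
apply: SmM_smooth; first exact: Uo_open.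
by move=> i j; rewrite (ord1 i); exact: SmV_phi.
Qed.

Lemma delprod_Uo z : delprod n z -> Uo z.
Proof. by case=> hx [hy xy]; rewrite /Uo /=; apply: dotp_gt0; exact: F_neq0. Qed.


Lemma phi_derivable z v : Uo z -> derivable phi z v.
Proof. by move=> Uz; have [_ [d _]] := phi_smooth; exact: (d [::] v z Uz). Qed.

Lemma transv1 (y w : Vt) : dotp y y = 1 -> y <> p -> dotp w p = 0 ->
  'D_((w, 0) : Vt * Vt) phi (p, y) = w.
Proof.
move=> hy yp wp.
have Uz : Uo (p, y) by apply: delprod_Uo; split => //; split => //; exact/nesym.
rewrite derive_mx; last exact: phi_derivable.
apply/matrixP => i j; rewrite mxE (ord1 i) derive_1P.
have t1 := neq_p_lt hp hy yp.
have -> : (fun h : R => phi (h *: ((w, 0) : Vt * Vt) + (p, y)) 0 j) =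
    (fun h => (p 0 j + h * w 0 j) * isq (1 + h ^+ 2 * dotp w w)).
  apply/funext => h; rewrite /phi /=.
  rewrite scaler0 add0r.
  have X1 : dotp (h *: w + p) p = 1 by rewrite dotpDl dotpZl wp mulr0 add0r.
  have -> : Fxy p (h *: w + p) y = (1 - dotp y p) *: (h *: w + p).
    by rewrite /Fxy X1 subrr scale0r subr0.
  rewrite N_scale ?subr_gt0 // /N.
  have -> : dotp (h *: w + p) (h *: w + p) = 1 + h ^+ 2 * dotp w w.
    rewrite !dotpDl !dotpDr !dotpZl !dotpZr wp (dotpC p w) wp hp; ring.
  by rewrite !mxE mulrC addrC.
exact: line_der (dotp_ge0 w).
Qed.

Lemma transv2 (x w : Vt) : dotp x x = 1 -> x <> p -> dotp w p = 0 ->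
  'D_((0, - w) : Vt * Vt) phi (x, p) = w.
Proof.
move=> hx xp wp.
have Uz : Uo (x, p) by apply: delprod_Uo; split => //; split => //.
rewrite derive_mx; last exact: phi_derivable.
apply/matrixP => i j; rewrite mxE (ord1 i) derive_1P.
have s1 := neq_p_lt hp hx xp.
have -> : (fun h : R => phi (h *: ((0, - w) : Vt * Vt) + (x, p)) 0 j) =
    (fun h => (- p 0 j + h * w 0 j) * isq (1 + h ^+ 2 * dotp w w)).
  apply/funext => h; rewrite /phi /=.
  rewrite scaler0 add0r.
  have X1 : dotp (h *: - w + p) p = 1 by rewrite dotpDl dotpZl dotpNl wp oppr0 mulr0 add0r.
  have -> : Fxy p x (h *: - w + p) = - ((1 - dotp x p) *: (h *: - w + p)).
    by rewrite /Fxy X1 subrr scale0r sub0r.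
  rewrite N_opp N_scale ?subr_gt0 // /N.
  have -> : dotp (h *: - w + p) (h *: - w + p) = 1 + h ^+ 2 * dotp w w.
    rewrite !dotpDl !dotpDr !dotpZl !dotpZr !dotpNl !dotpNr wp (dotpC p w) wp hp; ring.
  by rewrite !mxE; ring.
exact: line_der (dotp_ge0 w).
Qed.

End Final.

Unset Implicit Arguments.
Set Strict Implicit.

Theorem lemma8 (R : realType) (n : nat) (p : 'rV[R]_n.+1) :
  sphere n p ->
  exists (q : 'rV[R]_n.+1) (phi : 'rV[R]_n.+1 * 'rV[R]_n.+1 -> 'rV[R]_n.+1),
    sphere n q /\
    smooth_delprod_to_sphere n phi /\
    homotopy_equivalence R (delprod n) (sphere n) phi /\
    (forall z, delprod n z -> phi (tau n z) = - phi z) /\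
    transversal_S0 n phi q /\
    [set z | delprod n z /\ (phi z = q \/ phi z = - q)] = Tp n p `|` tau n @` Tp n p.
Proof.
move=> hp; rewrite /sphere /= in hp.
have phiS : forall z, delprod n z -> sphere n (phi p z).
  by case=> x y [hx [hy xy]]; rewrite /sphere /=; apply: N_sphere; exact: F_neq0.
exists p, (phi p); split => //; split.
  split => //; exists (Uo p); split; first by move=> z; exact: delprod_Uo.
  exact: phi_smooth.
split.
  split.
    apply: continuous_in_subspaceT => z; rewrite inE => hz.
    exact: (SmV_cont (@SmV_phi R n p) (delprod_Uo hp hz)).
  split; first exact: phiS.
  exists (fun w => (w, - w)); split.
    apply: continuous_in_subspaceT => w _; apply: cont_pair; first exact: cvg_id.
    by apply: continuousN; exact: cvg_id.
  split.
    move=> w; rewrite /sphere /delprod /= => hw; split => //; split.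
      by rewrite /sphere /= dotpNl dotpNr opprK.
    move=> E; have hw' : dotp w (- w) = 1 by rewrite -E.
    by rewrite dotpNr hw in hw'; lra.
  split.
    have inI : forall t : R, (`[0, 1]%classic : set R) t -> 0 <= t /\ t <= 1.
      by move=> t; rewrite /= in_itv /= => /andP.
    exists (fun w : R * ('rV[R]_n.+1 * 'rV[R]_n.+1) =>
      (N (hA p w.2.1 w.2.2 w.1), N (hB p w.2.1 w.2.2 w.1))); split.
      set U' := (`[0, 1]%classic `*` delprod n) : set (R * ('rV[R]_n.+1 * 'rV[R]_n.+1)).
      have nzA : forall w, U' w -> hA p w.2.1 w.2.2 w.1 != 0.
        move=> w [/inI [l0 l1] [hx [hy xy]]]; exact: hA_neq0.
      have nzB : forall w, U' w -> hB p w.2.1 w.2.2 w.1 != 0.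
        move=> w [/inI [l0 l1] [hx [hy xy]]]; exact: hB_neq0.
      have sA : SmV U' (fun w : R * ('rV[R]_n.+1 * 'rV[R]_n.+1) => hA p w.2.1 w.2.2 w.1).
        rewrite /hA; apply: SmV_add; apply: SmV_scale.
        - exact: Sm_lam.
        - exact: SmV_fst'.
        - by apply: SmB; [exact: Sm_cst|exact: Sm_lam].
        - by apply: SmV_F; [exact: SmV_fst'|exact: SmV_snd'].
      have sB : SmV U' (fun w : R * ('rV[R]_n.+1 * 'rV[R]_n.+1) => hB p w.2.1 w.2.2 w.1).
        rewrite /hB; apply: SmV_sub; apply: SmV_scale.
        - exact: Sm_lam.
        - exact: SmV_snd'.
        - by apply: SmB; [exact: Sm_cst|exact: Sm_lam].
        - by apply: SmV_F; [exact: SmV_fst'|exact: SmV_snd'].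
      apply: continuous_in_subspaceT => w; rewrite inE => hw.
      apply: (@cont_pair _ _ _ (fun w : R * ('rV[R]_n.+1 * 'rV[R]_n.+1) => N (hA p w.2.1 w.2.2 w.1))
                         (fun w : R * ('rV[R]_n.+1 * 'rV[R]_n.+1) => N (hB p w.2.1 w.2.2 w.1))).
        by apply: (SmV_cont _ hw); apply: SmV_N.
      by apply: (SmV_cont _ hw); apply: SmV_N.
    split.
      move=> t [x y] /inI [l0 l1] [hx [hy xy]] /=.
      rewrite /sphere /= in hx hy xy.
      split; first by rewrite /sphere /=; apply: N_sphere; exact: hA_neq0.
      split; first by rewrite /sphere /=; apply: N_sphere; exact: hB_neq0.
      exact: hAB.
    split.
      move=> [x y] _; rewrite /= /phi /hA /hB /= subr0 !scale0r add0r scale1r.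
      by rewrite sub0r N_opp.
    move=> [x y] [hx [hy xy]]; rewrite /hA /hB /= subrr scale0r addr0 subr0 !scale1r.
    by rewrite !N_unit.
  exists (fun w : R * 'rV[R]_n.+1 => w.2); split.
    by apply: continuous_in_subspaceT => w _; exact: cvg_snd.
  split; first by move=> t w _ hw.
  split; last by [].
  by move=> w hw; rewrite /= /phi /= F_anti.
split.
  by move=> [x y] _; rewrite /tau /phi /= F_tau N_opp.
split.
  move=> [x y] [hx [hy xy]] HE w; rewrite /sphere /= in hx hy xy HE.
  rewrite /tangent_sphere /tangent_delprod /=.
  have [ex|ey] := pre_fwd hp hx hy xy HE.
    subst x; have yp : y <> p by exact/nesym.
    rewrite /phi /= (pre_bwd1 hp hy yp) => wp.
    exists (w, 0); split; first by split => //=; rewrite dotp0l.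
    exact: transv1.
  subst y; rewrite /phi /= (pre_bwd2 hp hx xy) dotpNr => /eqP; rewrite oppr_eq0 => /eqP wp.
  exists (0, - w); split; first by split => /=; rewrite ?dotp0l ?dotpNl ?wp ?oppr0.
  exact: transv2.
apply/seteqP; split.
  move=> [x y] [[hx [hy xy]] HE]; rewrite /sphere /phi /= in hx hy xy HE *.
  have [ex|ey] := pre_fwd hp hx hy xy HE.
    by left; rewrite /Tp /=; split => //; split => //; rewrite -ex; exact/nesym.
  right; exists (p, x); last by rewrite /tau /= ey.
  by rewrite /Tp /=; split => //; split => //; rewrite -ey.
move=> [x y] [|[[a b] [/= ea [hb bp]] E]].
  rewrite /Tp /= => -[ex [hy yp]]; rewrite ex; split.
    by split => //; split => //; exact/nesym.
  by left; rewrite /phi /=; apply: pre_bwd1.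
move: E; rewrite /tau /= => -[<- <-]; rewrite ea; split.
  by split => //; split => //.
by right; rewrite /phi /=; apply: pre_bwd2.
Qed.
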